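(* The MPB rule $M$ satisfies maximal coverage: for every PB instance $I$, every $S\in M(I)$, every $p\in S$ such that $\{j\in N: p\in A_j\}\subseteq\{j\in N:(S\setminus\{p\})\cap A_j\ne\emptyset\}$, and every voter $i\in N$, if $W_M(I)\cap A_i=\emptyset$ then $c(a)>b-c(S\setminus\{p\})$ for all $a\in A_i$.
   Context: A PB instance is $I=\langle N,P,c,b,\mathcal{A}\rangle$ with voters $N=\{1,\dots,n\}$, projects $P$, costs $c:P\to\mathbb{N}$, budget $b\in\mathbb{N}$, and approval sets $A_i\subseteq P$. $c(S)=\sum_{p\in S}c(p)$; $S$ is feasible if $c(S)\le b$; $u_i(S)=c(S\cap A_i)$. The MPB rule $M$ outputs $M(I)$, the set of all feasible $S$ maximizing $\min_{i\in N}u_i(S)$ among feasible sets. $W_M(I)=\{p\in P:\exists S\in M(I),\ p\in S\}$. *)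

(* Defs.v *)
From mathcomp Require Import all_boot.
Set Implicit Arguments. Unset Strict Implicit. Unset Printing Implicit Defensive.

Section PB.
Variables (N P : finType) (c : P -> nat) (b : nat) (A : N -> {set P}).

Definition cost (S : {set P}) : nat := \sum_(p in S) c p.

Definition feasible (S : {set P}) : bool := cost S <= b.

Definition util (i : N) (S : {set P}) : nat := cost (S :&: A i).

(* min_{i in N} u_i(S); the neutral element cost setT is an upper bound of
   every utility, so it plays the role of +infinity (relevant only if N is empty). *)
Definition minutil (S : {set P}) : nat := \big[minn/cost setT]_(i : N) util i S.

Definition MPB (S : {set P}) : Prop :=
  feasible S /\ forall T : {set P}, feasible T -> minutil T <= minutil S.

Definition winners (p : P) : Prop := exists2 S, MPB S & p \in S.

End PB.

(* Main.v *)
Require Import Defs.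
From mathcomp Require Import all_boot.

Theorem proposition4 (N P : finType) (c : P -> nat) (b : nat) (A : N -> {set P})
  (S : {set P}) (p : P) :
  MPB c b A S -> p \in S ->
  (forall j : N, p \in A j -> (S :\ p) :&: A j != set0) ->
  forall i : N,
    (forall a : P, winners c b A a -> a \notin A i) ->
    forall a : P, a \in A i -> b - cost c (S :\ p) < c a.
Proof.
move=> [fS optS] _ _ i hW a ha.
rewrite ltnNge; apply/negP => hle.
have SAi : S :&: A i = set0.
  apply/setP => x; rewrite !inE; apply/negP => /andP [xS xA].
  by move: (hW x (ex_intro2 _ _ S (conj fS optS) xS)); rewrite xA.
have m0 : minutil c A S = 0.
  apply/eqP; rewrite -leqn0.
  have : minutil c A S <= util c A i S.
    rewrite /minutil; move: (mem_index_enum i).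
    elim: (index_enum N) => [|j s IH] //; rewrite inE big_cons.
    case/orP => [/eqP <-|/IH h]; first exact: geq_minl.
    exact: leq_trans (geq_minr _ _) h.
  by rewrite /util SAi /cost big_set0.
have fa : feasible c b [set a].
  by rewrite /feasible /cost big_set1; apply: leq_trans hle (leq_subr _ _).
have : winners c b A a.
  exists [set a]; last by rewrite inE.
  split=> // T fT; rewrite (leq_trans (optS T fT)) // m0 //.
by move/hW; rewrite ha.
Qed.
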